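(* Let $D$ be a division algebra and let $\sigma_1,\sigma_2$ be two commuting automorphisms of $D$. If $\sigma_1^{k_1}\circ\sigma_2^{-k_2}$ is not an inner automorphism of $D$ for any positive integers $k_1,k_2$, then the tuple $(\sigma_1,\sigma_2)$ is not automorphically normalizable over $D$.
   Context: All rings are associative with unity. An inner automorphism of $D$ is a map $r\mapsto crc^{-1}$ with $c\in D^\times$. $D[t_1,t_2;\sigma_1,\sigma_2]$ is the skew polynomial ring in two commuting variables with $t_ia=\sigma_i(a)t_i$ for $a\in D$. For a ring $S\supseteq D$, $a\in S$ is automorphic over $D$ with respect to $\tau$ if $ab=\tau(b)a$ for all $b\in D$. Commuting $a_1,\ldots,a_m\in S$ are (left) algebraically independent over $D$ if monomials in them are left linearly independent over $D$. $S$ is automorphically normalizable over $D$ if there exist $m\ge0$ and commuting $a_1,\ldots,a_m\in S$, automorphic over $D$ with respect to pairwise commuting automorphisms, left algebraically independent over $D$, such that $S$ is finitely generated as a left module over the subring $D[a_1,\ldots,a_m]$ generated by $D\cup\{a_1,\ldots,a_m\}$. The tuple $(\sigma_1,\sigma_2)$ is automorphically normalizable over $D$ if every quotient of $D[t_1,t_2;\sigma_1,\sigma_2]$ by a proper two-sided ideal is automorphically normalizable over $D$. *)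

(* Defs.v *)
From HB Require Import structures.
From mathcomp Require Import all_boot all_order all_algebra.
Set Implicit Arguments. Unset Strict Implicit. Unset Printing Implicit Defensive.
Import GRing.Theory.
Local Open Scope ring_scope.

(* The skew polynomial ring D[t1,t2;s1,s2] is represented on the additive
   group {poly {poly D}}: the coefficient p`_j`_i is the (left) coefficient of
   the monomial t1^i t2^j.  Multiplication is the skew one:
   (a t1^i t2^j)(b t1^k t2^l) = a s1^i (s2^j b) t1^(i+k) t2^(j+l). *)
Definition skewpoly (D : nzRingType) := {poly {poly D}}.

Definition spC (D : nzRingType) (c : D) : skewpoly D := (c%:P)%:P.
Definition spt1 (D : nzRingType) : skewpoly D := ('X : {poly D})%:P.
Definition spt2 (D : nzRingType) : skewpoly D := 'X.

Definition spmul (D : nzRingType) (s1 s2 : D -> D) (p q : skewpoly D)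
  : skewpoly D :=
  \sum_(j < size p) \sum_(i < size p`_j) \sum_(l < size q) \sum_(k < size q`_l)
     (((p`_j`_i * iter i s1 (iter j s2 q`_l`_k)) *: 'X^(i + k))%:P
        * 'X^(j + l)).

Definition spexp (D : nzRingType) (s1 s2 : D -> D) (x : skewpoly D) (n : nat)
  : skewpoly D := iter n (spmul s1 s2 x) 1.

Definition spmono (D : nzRingType) (s1 s2 : D -> D) (m : nat)
  (a : 'I_m -> skewpoly D) (al : m.-tuple nat) : skewpoly D :=
  \big[spmul s1 s2/1]_(i < m) spexp s1 s2 (a i) (tnth al i).

Definition sp_ideal (D : nzRingType) (s1 s2 : D -> D)
  (I : skewpoly D -> Prop) : Prop :=
  [/\ I 0, (forall x y, I x -> I y -> I (x - y)) &
      forall r x, I x -> I (spmul s1 s2 r x) /\ I (spmul s1 s2 x r)].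

Definition is_inner (D : unitRingType) (f : D -> D) : Prop :=
  exists c : D, c \is a GRing.unit /\ forall r, f r = c * r * c^-1.

(* Elements of the quotient S = D[t1,t2;s1,s2]/I are represented by
   elements of D[t1,t2;s1,s2]; equality in S is congruence modulo I.
   D is a subring of S via spC.
   [sp_gen_subring s1 s2 a y]: y lies in the subring of D[t1,t2;s1,s2]
   generated by D and the a_i (its image in S is the subring D[a_1..a_m]). *)
Definition sp_gen_subring (D : nzRingType) (s1 s2 : D -> D) (m : nat)
  (a : 'I_m -> skewpoly D) (y : skewpoly D) : Prop :=
  forall P : skewpoly D -> Prop,
    (forall b, P (spC b)) -> (forall i, P (a i)) ->
    (forall u v, P u -> P v -> P (u - v)) ->
    (forall u v, P u -> P v -> P (spmul s1 s2 u v)) -> P y.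

Definition quot_aut_normalizable (D : nzRingType) (s1 s2 : D -> D)
  (I : skewpoly D -> Prop) : Prop :=
  let mul := spmul s1 s2 in
  exists (m : nat) (a : 'I_m -> skewpoly D) (tau : 'I_m -> {rmorphism D -> D}),
    (forall i, bijective (tau i)) /\
    (forall i j, forall b, tau i (tau j b) = tau j (tau i b)) /\
    [/\
        (forall i j, I (mul (a i) (a j) - mul (a j) (a i))),
        (* a_i is automorphic over D w.r.t. tau_i : a_i b = tau_i(b) a_i in S *)
        (forall i b, I (mul (a i) (spC b) - mul (spC (tau i b)) (a i))),
        (* left algebraic independence over D in S *)
        (forall (s : seq (m.-tuple nat)) (c : m.-tuple nat -> D), uniq s ->
            I (\sum_(al <- s) mul (spC (c al)) (spmono s1 s2 a al)) ->
            forall al, al \in s -> c al = 0) &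
        (* S is a finitely generated left D[a_1..a_m]-module *)
        (exists g : seq (skewpoly D), forall x : skewpoly D,
          exists r : seq (skewpoly D),
            [/\ size r = size g,
                (forall y, y \in r -> sp_gen_subring s1 s2 a y) &
                I (x - \sum_(k < size g) mul r`_k g`_k)])].

Definition tuple_aut_normalizable (D : nzRingType) (s1 s2 : D -> D) : Prop :=
  forall I : skewpoly D -> Prop, sp_ideal s1 s2 I -> ~ I 1 ->
    quot_aut_normalizable s1 s2 I.

(* Main.v *)
Require Import Defs.
From HB Require Import structures.
From mathcomp Require Import all_boot all_order all_algebra.
Import GRing.Theory.
Set Implicit Arguments. Unset Strict Implicit.
Local Open Scope ring_scope.
From Stdlib Require Import Classical.

Lemma coef2_sum (D : nzRingType) (T : Type) (r : seq T) (F : T -> skewpoly D) J I :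
  (\sum_(i <- r) F i)`_J`_I = \sum_(i <- r) (F i)`_J`_I.
Proof. by rewrite !coef_sum. Qed.

Lemma coef2B (D : nzRingType) (x y : skewpoly D) J I :
  (x - y)`_J`_I = x`_J`_I - y`_J`_I.
Proof. by rewrite !coefB. Qed.

Lemma coef_mono (D : nzRingType) (c : D) a b J I :
  (((c *: 'X^a)%:P * 'X^b) : skewpoly D)`_J`_I =
  if b == J then (if a == I then c else 0) else 0.
Proof.
rewrite coefMXn coefC; case: (ltnP J b) => hJ.
  by rewrite coef0 (gtn_eqF hJ).
rewrite subn_eq0; case: eqVneq => [->|hne]; last first.
  by rewrite leqNgt ltn_neqAle hne hJ /= coef0.
rewrite leqnn coefZ coefXn eq_sym; case: eqP => _; first by rewrite mulr1.
by rewrite mulr0.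
Qed.

Lemma iter_f0 (D : nzRingType) (f : D -> D) n : f 0 = 0 -> iter n f 0 = 0.
Proof. by move=> h; elim: n => //= n ->. Qed.

Lemma sum_if_const (D : nzRingType) n (b : bool) (F : 'I_n -> D) :
  \sum_(k < n) (if b then F k else 0) = if b then \sum_(k < n) F k else 0.
Proof. by case: b => //; rewrite big1. Qed.

Lemma S2 (D : nzRingType) (F : nat -> D) n I :
  (forall k, (n <= k)%N -> F k = 0) ->
  \sum_(k < n) (if (k <= I)%N then F k else 0) = \sum_(k < I.+1) F k.
Proof.
move=> hF.
rewrite (big_ord_widen (n + I.+1) (fun k => if (k <= I)%N then F k else 0) (leq_addr _ _)).
rewrite (big_ord_widen (n + I.+1) F (leq_addl _ _)).
rewrite big_mkcond [RHS]big_mkcond; apply: eq_bigr => k _.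
rewrite ltnS; case: (ltnP k n) => hk; case: (leqP k I) => // hkI.
by rewrite hF.
Qed.

Lemma S1 (D : nzRingType) (F : nat -> D) (n i I : nat) :
  (forall k, (n <= k)%N -> F k = 0) ->
  \sum_(k < n) (if (i + k == I)%N then F k else 0) = if (i <= I)%N then F (I - i)%N else 0.
Proof.
move=> hF.
rewrite (big_ord_widen (n + I.+1) (fun k => if (i + k == I)%N then F k else 0) (leq_addr _ _)).
rewrite big_mkcond.
transitivity (\sum_(k < n + I.+1) (if (i + k == I)%N then F k else 0)).
  apply: eq_bigr => k _; case: ltnP => // hk; case: ifP => // _; by rewrite hF.
case: leqP => hiI; last first.
  rewrite big1 // => k _; case: eqP => // hk; exfalso.
  by move: hiI; rewrite -hk ltnNge leq_addr.
have hlt : (I - i < n + I.+1)%N.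
  by apply: (leq_ltn_trans (leq_subr _ _)); rewrite ltn_addl.
rewrite (bigD1 (Ordinal hlt)) //= subnKC // eqxx big1 ?addr0 // => k hk.
case: eqP => // hik; exfalso; move/eqP: hk; apply; apply: val_inj => /=.
by rewrite -[X in (X - i)%N]hik addKn.
Qed.

Lemma spmulE (D : nzRingType) (s1 s2 : D -> D) (h1 : s1 0 = 0) (h2 : s2 0 = 0)
  (p q : skewpoly D) J I :
  (spmul s1 s2 p q)`_J`_I = \sum_(j < J.+1) \sum_(i < I.+1)
     p`_j`_i * iter i s1 (iter j s2 q`_(J - j)%N`_(I - i)%N).
Proof.
rewrite /spmul coef2_sum.
pose T j i l k := p`_j`_i * iter i s1 (iter j s2 q`_l`_k).
have T0 : forall j i l k, leq (size (q`_l)) k -> T j i l k = 0.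
  by move=> j i l k hk; rewrite /T (nth_default 0 hk) !iter_f0 // mulr0.
have T0' : forall j i l k, (size q <= l)%N -> T j i l k = 0.
  by move=> j i l k hk; rewrite /T (nth_default 0 hk) coef0 !iter_f0 // mulr0.
have T0'' : forall j i l k, leq (size (p`_j)) i -> T j i l k = 0.
  by move=> j i l k hk; rewrite /T nth_default // mul0r.
have T0''' : forall j i l k, (size p <= j)%N -> T j i l k = 0.
  by move=> j i l k hk; rewrite /T (nth_default 0 hk) coef0 mul0r.
transitivity (\sum_(j < size p) (if (j <= J)%N then
    \sum_(i < I.+1) T j i (J - j)%N (I - i)%N else 0)); last first.
  rewrite (S2 (F := fun j => \sum_(i < I.+1) T j i (J - j)%N (I - i)%N)) //.
  by move=> j hj; rewrite big1 // => i _; rewrite T0'''.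
apply: eq_bigr => j _; rewrite coef2_sum.
transitivity (\sum_(i < size (p`_j)) (if (j <= J)%N then
    (if (i <= I)%N then T j i (J - j)%N (I - i)%N else 0) else 0)).
  apply: eq_bigr => i _; rewrite coef2_sum.
  transitivity (\sum_(l < size q) (if (j + l == J)%N then
    (if (i <= I)%N then T j i l (I - i)%N else 0) else 0)).
    apply: eq_bigr => l _; rewrite coef2_sum.
    under eq_bigr => k _ do rewrite coef_mono.
    rewrite sum_if_const (S1 (F := T j i l)) //.
    by move=> k hk; rewrite T0.
  rewrite (S1 (F := fun l => if (i <= I)%N then T j i l (I - i)%N else 0)) //.
  by move=> l hl; rewrite T0' ?if_same.
rewrite sum_if_const (S2 (F := fun i => T j i (J - j)%N (I - i)%N)) //.
by move=> i hi; rewrite T0''.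
Qed.

Lemma iter_f1 (D : nzRingType) (f : D -> D) n : f 1 = 1 -> iter n f 1 = 1.
Proof. by move=> h; elim: n => //= n ->. Qed.

Lemma pure1 (D : nzRingType) (s1 s2 : D -> D) (h1 : s1 0 = 0) (h2 : s2 0 = 0)
  (p q : skewpoly D) I :
  (spmul s1 s2 p q)`_0`_I = \sum_(i < I.+1) p`_0`_i * iter i s1 (q`_0`_(I - i)%N).
Proof. by rewrite spmulE // big_ord_recl big_ord0 addr0. Qed.

Lemma pure2 (D : nzRingType) (s1 s2 : D -> D) (h1 : s1 0 = 0) (h2 : s2 0 = 0)
  (p q : skewpoly D) J :
  (spmul s1 s2 p q)`_J`_0 = \sum_(j < J.+1) p`_j`_0 * iter j s2 (q`_(J - j)%N`_0).
Proof.
by rewrite spmulE //; apply: eq_bigr => j _; rewrite big_ord_recl big_ord0 addr0.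
Qed.

Lemma spC_coef (D : nzRingType) (b : D) J I :
  (spC b)`_J`_I = if (J == 0%N) && (I == 0%N) then b else 0.
Proof. by rewrite /spC coefC; case: eqP => _ /=; [exact: coefC | exact: coef0]. Qed.

Lemma spmulCl (D : nzRingType) (s1 s2 : D -> D) (h1 : s1 0 = 0) (h2 : s2 0 = 0)
  (c : D) (x : skewpoly D) J I :
  (spmul s1 s2 (spC c) x)`_J`_I = c * x`_J`_I.
Proof.
rewrite spmulE // big_ord_recl [X in _ + X]big1 ?addr0; last first.
  by move=> j _; rewrite big1 // => i _; rewrite spC_coef /= mul0r.
rewrite big_ord_recl [X in _ + X]big1 ?addr0; last by move=> i _; rewrite spC_coef /= mul0r.
by rewrite spC_coef /= !subn0.
Qed.

Lemma spmul1l (D : nzRingType) (s1 s2 : D -> D) (h1 : s1 0 = 0) (h2 : s2 0 = 0)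
  (x : skewpoly D) : spmul s1 s2 1 x = x.
Proof.
apply/polyP => J; apply/polyP => I.
have -> : (1 : skewpoly D) = spC 1 by rewrite /spC !polyC1.
by rewrite spmulCl // mul1r.
Qed.

Lemma spmul1r (D : nzRingType) (s1 s2 : D -> D) (h1 : s1 0 = 0) (h2 : s2 0 = 0)
  (h1' : s1 1 = 1) (h2' : s2 1 = 1) (x : skewpoly D) : spmul s1 s2 x 1 = x.
Proof.
apply/polyP => J; apply/polyP => I.
have -> : (1 : skewpoly D) = spC 1 by rewrite /spC !polyC1.
rewrite spmulE // big_ord_recr /= [X in X + _]big1 ?add0r; last first.
  move=> j _; rewrite big1 // => i _; rewrite spC_coef subn_eq0 leqNgt ltn_ord /=.
  by rewrite !iter_f0 // mulr0.
rewrite big_ord_recr /= [X in X + _]big1 ?add0r; last first.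
  move=> i _; rewrite spC_coef subnn eqxx subn_eq0 leqNgt ltn_ord /=.
  by rewrite !iter_f0 // mulr0.
by rewrite spC_coef !subnn /= !iter_f1 // mulr1.
Qed.

Lemma spmulCr1 (D : nzRingType) (s1 s2 : D -> D) (h1 : s1 0 = 0) (h2 : s2 0 = 0)
  (x : skewpoly D) (b : D) I :
  (spmul s1 s2 x (spC b))`_0`_I = x`_0`_I * iter I s1 b.
Proof.
rewrite pure1 // big_ord_recr /= [X in X + _]big1 ?add0r; last first.
  move=> i _; rewrite spC_coef subn_eq0 leqNgt ltn_ord /=.
  by rewrite !iter_f0 // mulr0.
by rewrite spC_coef subnn.
Qed.

Lemma spmulCr2 (D : nzRingType) (s1 s2 : D -> D) (h1 : s1 0 = 0) (h2 : s2 0 = 0)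
  (x : skewpoly D) (b : D) J :
  (spmul s1 s2 x (spC b))`_J`_0 = x`_J`_0 * iter J s2 b.
Proof.
rewrite pure2 // big_ord_recr /= [X in X + _]big1 ?add0r; last first.
  move=> i _; rewrite spC_coef subn_eq0 leqNgt ltn_ord /=.
  by rewrite !iter_f0 // mulr0.
by rewrite spC_coef subnn.
Qed.

Lemma coef2D (D : nzRingType) (x y : skewpoly D) J I :
  (x + y)`_J`_I = x`_J`_I + y`_J`_I.
Proof. by rewrite !coefD. Qed.

Lemma one_coef (D : nzRingType) J I :
  (1 : skewpoly D)`_J`_I = if (J == 0%N) && (I == 0%N) then 1 else 0.
Proof. by rewrite -spC_coef /spC !polyC1. Qed.

Definition I0 (D : nzRingType) (p : skewpoly D) : Prop :=
  (forall i, p`_0`_i = 0) /\ (forall j, p`_j`_0 = 0).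

Lemma I0_ideal (D : nzRingType) (s1 s2 : D -> D) (h1 : s1 0 = 0) (h2 : s2 0 = 0) :
  sp_ideal s1 s2 (@I0 D).
Proof.
split.
- by split => i; rewrite !coef0.
- by move=> x y [hx1 hx2] [hy1 hy2]; split => i; rewrite coef2B ?hx1 ?hy1 ?hx2 ?hy2 subrr.
move=> r x [hx1 hx2]; split; split => i.
- by rewrite pure1 //; apply: big1 => j _; rewrite hx1 iter_f0 // mulr0.
- by rewrite pure2 //; apply: big1 => j _; rewrite hx2 iter_f0 // mulr0.
- by rewrite pure1 //; apply: big1 => j _; rewrite hx1 mul0r.
- by rewrite pure2 //; apply: big1 => j _; rewrite hx2 mul0r.
Qed.

Lemma I0_not1 (D : nzRingType) : ~ @I0 D 1.
Proof. by case=> h _; move: (h 0%N); rewrite one_coef /=; apply/eqP/oner_neq0. Qed.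

Lemma L0 (R : Type) (op : R -> R -> R) (e : R) (lu : forall x, op e x = x)
  (T : eqType) (r : seq T) (F : T -> R) :
  (forall i, i \in r -> F i = e) -> \big[op/e]_(i <- r) F i = e.
Proof.
elim: r => [|x r IH] hF; first by rewrite big_nil.
rewrite big_cons hF ?mem_head // lu; apply: IH => i ir; apply: hF.
by rewrite inE ir orbT.
Qed.

Lemma L1 (R : Type) (op : R -> R -> R) (e : R) (lu : forall x, op e x = x)
  (T : eqType) (r : seq T) (F : T -> R) p :
  (forall i, i \in r -> i != p -> F i = e) -> uniq r -> p \in r ->
  \big[op/e]_(i <- r) F i = op (F p) e.
Proof.
elim: r => [|x r IH] hF //= /andP[xr ur]; rewrite inE => /orP[/eqP px|pr].
  subst x; rewrite big_cons (L0 lu) // => i ir; apply: hF; first by rewrite inE ir orbT.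
  by apply: contraNneq xr => <-.
have xp : x != p by apply: contraNneq xr => ->.
rewrite big_cons hF ?mem_head // lu; apply: IH => // i ir; apply: hF.
by rewrite inE ir orbT.
Qed.

Lemma L2 (R : Type) (op : R -> R -> R) (e : R) (lu : forall x, op e x = x)
  (T : eqType) (r : seq T) (F : T -> R) p q :
  (forall i, i \in r -> i != p -> i != q -> F i = e) -> uniq r -> p \in r ->
  q \in r -> p != q ->
  \big[op/e]_(i <- r) F i = op (F p) (op (F q) e) \/
  \big[op/e]_(i <- r) F i = op (F q) (op (F p) e).
Proof.
elim: r => [|x r IH] hF //= /andP[xr ur]; rewrite !inE => hp hq pq.
have hF' : forall i, i \in r -> i != p -> i != q -> F i = e.
  by move=> i ir; apply: hF; rewrite inE ir orbT.
case: (eqVneq x p) => [xp|xp].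
  subst x; have qr : q \in r by move: hq; rewrite eq_sym (negbTE pq).
  left; rewrite big_cons (L1 lu (p := q)) // => i ir iq.
  apply: hF' => //; by apply: contraNneq xr => <-.
case: (eqVneq x q) => [xq|xq].
  subst x; have pr : p \in r by move: hp; rewrite (negbTE pq).
  right; rewrite big_cons (L1 lu (p := p)) // => i ir ip.
  apply: hF' => //; by apply: contraNneq xr => <-.
have pr : p \in r by move: hp; rewrite eq_sym (negbTE xp).
have qr : q \in r by move: hq; rewrite eq_sym (negbTE xq).
by rewrite !big_cons hF ?mem_head // !lu; apply: IH.
Qed.

Lemma iter_can (D : Type) (f g : D -> D) (fg : cancel g f) n r :
  iter n f (iter n g r) = r.
Proof. by elim: n => //= n IH; rewrite -iterS iterSr fg. Qed.
Unset Implicit Arguments. Set Strict Implicit.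

Theorem proposition5p11 (k : fieldType) (D : unitAlgType k)
  (HD : forall x : D, x != 0 -> x \is a GRing.unit)
  (s1 s2 : {lrmorphism D -> D}) (s2inv : D -> D)
  (bij1 : bijective s1) (s2K : cancel s2 s2inv) (s2invK : cancel s2inv s2)
  (comm12 : forall x, s1 (s2 x) = s2 (s1 x))
  (Hinner : forall k1 k2 : nat, (0 < k1)%N -> (0 < k2)%N ->
     ~ is_inner (fun r => iter k1 s1 (iter k2 s2inv r))) :
  ~ tuple_aut_normalizable s1 s2.
Proof.
move=> Hnorm.
have h1 : (s1 : D -> D) 0 = 0 := rmorph0 s1.
have h2 : (s2 : D -> D) 0 = 0 := rmorph0 s2.
have h1' : (s1 : D -> D) 1 = 1 := rmorph1 s1.
have h2' : (s2 : D -> D) 1 = 1 := rmorph1 s2.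
have [m [a [tau [_ [_ [Hc Ha Hind Hfg]]]]]] :=
  Hnorm (@I0 D) (I0_ideal h1 h2) (@I0_not1 D).
have Ha1 : forall l i b, (a l)`_0`_i * iter i s1 b = tau l b * (a l)`_0`_i.
  move=> l i b; have [H _] := Ha l b; move: (H i).
  by rewrite coef2B spmulCr1 // spmulCl // => /eqP; rewrite subr_eq0 => /eqP.
have Ha2 : forall l j b, (a l)`_j`_0 * iter j s2 b = tau l b * (a l)`_j`_0.
  move=> l j b; have [_ H] := Ha l b; move: (H j).
  by rewrite coef2B spmulCr2 // spmulCl // => /eqP; rewrite subr_eq0 => /eqP.
pose T1 (y : skewpoly D) := forall j, (0 < j)%N -> y`_j`_0 = 0.
pose T2 (y : skewpoly D) := forall i, (0 < i)%N -> y`_0`_i = 0.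
have dich : forall l, T2 (a l) \/ T1 (a l).
  move=> l; case: (classic (T2 (a l))) => H; [by left | right].
  move=> j hj; case: (eqVneq (a l)`_j`_0 0) => // hw; exfalso.
  have [i Hi] := not_all_ex_not _ _ H.
  have [hi hu] := imply_to_and _ _ Hi.
  have hu' : (a l)`_0`_i != 0 by apply/eqP.
  apply: (Hinner i j hi hj).
  set u := (a l)`_0`_i in hu' *; set w := (a l)`_j`_0 in hw *.
  have uU := HD _ hu'; have wU := HD _ hw.
  exists (u^-1 * w); split; first by rewrite unitrMl // unitrV.
  move=> r; set b := iter j s2inv r.
  have hb : iter j s2 b = r by apply: iter_can.
  have e1 : u * iter i s1 b = tau l b * u by exact: Ha1.
  have e2 : w * r = tau l b * w by rewrite -[in LHS]hb; exact: Ha2.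
  rewrite invrM ?unitrV // invrK.
  have -> : iter i s1 b = u^-1 * (tau l b * u) by rewrite -e1 mulKr.
  have -> : tau l b = w * r * w^-1 by rewrite e2 mulrK.
  by rewrite !mulrA.
have genT1 : (forall l, T1 (a l)) -> forall y, sp_gen_subring s1 s2 a y -> T1 y.
  move=> HT y hy; apply: hy => //.
  - by move=> b j hj; rewrite spC_coef /= (gtn_eqF hj).
  - by move=> u v hu hv j hj; rewrite coef2B hu ?hv // subr0.
  move=> u v hu hv J hJ; rewrite pure2 //; apply: big1 => j _.
  case: (posnP j) => [j0|jp]; last by rewrite hu // mul0r.
  by rewrite j0 subn0 /= hv // mulr0.
have genT2 : (forall l, T2 (a l)) -> forall y, sp_gen_subring s1 s2 a y -> T2 y.
  move=> HT y hy; apply: hy => //.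
  - by move=> b j hj; rewrite spC_coef /= (gtn_eqF hj).
  - by move=> u v hu hv j hj; rewrite coef2B hu ?hv // subr0.
  move=> u v hu hv J hJ; rewrite pure1 //; apply: big1 => j _.
  case: (posnP j) => [j0|jp]; last by rewrite hu // mul0r.
  by rewrite j0 subn0 /= hv // mulr0.
case: (classic (forall l, T1 (a l))) => HT1.
  have [g Hg] := Hfg.
  pose N := (\max_(y <- g) size y)%N.
  have [r [hsz hr [_ hI]]] := Hg 'X^N.
  move: (hI N); rewrite coef2B coef2_sum big1 ?subr0.
    by rewrite coefXn eqxx /= coef1 /=; apply/eqP/oner_neq0.
  move=> kk _; rewrite pure2 //; apply: big1 => j _.
  case: (posnP j) => [j0|jp].
    rewrite j0 subn0 /= (nth_default 0 (_ : leq (size g`_kk) N)) ?coef0 ?mulr0 //.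
    by apply: (@leq_bigmax_seq _ g xpredT size _ (mem_nth 0 (ltn_ord kk))).
  rewrite (genT1 HT1 (r`_kk)) ?mul0r //; apply: hr; apply: mem_nth; rewrite hsz //.
case: (classic (forall l, T2 (a l))) => HT2.
  have [g Hg] := Hfg.
  pose sz0 := fun y : skewpoly D => size (y`_0).
  pose N := (\max_(y <- g) sz0 y)%N.
  have [r [hsz hr [hI _]]] := Hg ('X^N)%:P.
  move: (hI N); rewrite coef2B coef2_sum big1 ?subr0.
    by rewrite coefC /= coefXn eqxx /=; apply/eqP/oner_neq0.
  move=> kk _; rewrite pure1 //; apply: big1 => j _.
  case: (posnP j) => [j0|jp].
    rewrite j0 subn0 /= (nth_default 0 (_ : leq (size g`_kk`_0) N)) ?mulr0 //.
    by apply: (@leq_bigmax_seq _ g xpredT sz0 _ (mem_nth 0 (ltn_ord kk))).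
  rewrite (genT2 HT2 (r`_kk)) ?mul0r //; apply: hr; apply: mem_nth; rewrite hsz //.
have [p HnT1] := not_all_ex_not _ _ HT1.
have [q HnT2] := not_all_ex_not _ _ HT2.
have hp2 : T2 (a p) by case: (dich p) => // /HnT1.
have hq1 : T1 (a q) by case: (dich q) => // /HnT2.
have pq : p != q by apply/eqP => epq; apply: HnT1; rewrite epq.
pose cp := (a p)`_0`_0; pose cq := (a q)`_0`_0.
pose tpq : m.-tuple nat := [tuple ((i == p) + (i == q))%N | i < m].
pose tp : m.-tuple nat := [tuple ((i == p) : nat) | i < m].
pose tq : m.-tuple nat := [tuple ((i == q) : nat) | i < m].
pose t0 : m.-tuple nat := [tuple 0%N | i < m].
have qp : (q == p) = false by rewrite eq_sym (negbTE pq).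
have d1 : (tp == tpq) = false.
  apply/eqP => e; have := congr1 (fun t => tnth t q) e.
  by rewrite !tnth_mktuple eqxx qp.
have d2 : (tq == tpq) = false.
  apply/eqP => e; have := congr1 (fun t => tnth t p) e.
  by rewrite !tnth_mktuple eqxx (negbTE pq).
have d3 : (t0 == tpq) = false.
  apply/eqP => e; have := congr1 (fun t => tnth t p) e.
  by rewrite !tnth_mktuple eqxx (negbTE pq).
have d4 : (tq == tp) = false.
  apply/eqP => e; have := congr1 (fun t => tnth t p) e.
  by rewrite !tnth_mktuple eqxx (negbTE pq).
have d5 : (t0 == tp) = false.
  apply/eqP => e; have := congr1 (fun t => tnth t p) e.
  by rewrite !tnth_mktuple eqxx.
have d6 : (t0 == tq) = false.
  apply/eqP => e; have := congr1 (fun t => tnth t q) e.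
  by rewrite !tnth_mktuple eqxx.
pose c (al : m.-tuple nat) : D := if al == tpq then 1 else if al == tp then - tau p cq
  else if al == tq then - cp else if al == t0 then cp * cq else 0.
pose s := [:: tpq; tp; tq; t0].
have us : uniq s.
  by rewrite /s /= !inE eq_sym d1 eq_sym d2 eq_sym d3 eq_sym d4 eq_sym d5 eq_sym d6.
have spe0 : forall x, spexp s1 s2 x 0 = 1 by [].
have spe1 : forall x, spexp s1 s2 x 1 = x by move=> x; rewrite /spexp /= spmul1r.
have lu : forall x : skewpoly D, spmul s1 s2 1 x = x by move=> x; rewrite spmul1l.
have Hm0 : spmono s1 s2 a t0 = 1.
  by rewrite /spmono (L0 lu) // => i _; rewrite tnth_mktuple.
have Hmp : spmono s1 s2 a tp = a p.
  rewrite /spmono (L1 lu (p := p)) ?index_enum_uniq ?mem_index_enum //.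
    by rewrite tnth_mktuple eqxx spe1 spmul1r.
  by move=> i _ ip; rewrite tnth_mktuple (negbTE ip).
have Hmq : spmono s1 s2 a tq = a q.
  rewrite /spmono (L1 lu (p := q)) ?index_enum_uniq ?mem_index_enum //.
    by rewrite tnth_mktuple eqxx spe1 spmul1r.
  by move=> i _ ip; rewrite tnth_mktuple (negbTE ip).
have hFpq : forall i, i \in index_enum 'I_m -> i != p -> i != q ->
    spexp s1 s2 (a i) (tnth tpq i) = 1.
  by move=> i _ ip iq; rewrite tnth_mktuple (negbTE ip) (negbTE iq).
have Hmpq : I0 (spmono s1 s2 a tpq - spmul s1 s2 (a p) (a q)).
  have [e|e] := L2 lu hFpq (index_enum_uniq _) (mem_index_enum _) (mem_index_enum _) pq;
    rewrite /spmono e !tnth_mktuple !eqxx qp (negbTE pq) /= !spmul1r //.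
    by rewrite subrr; split => i; rewrite !coef0.
have hM1 : forall I, (spmono s1 s2 a tpq)`_0`_I = (spmul s1 s2 (a p) (a q))`_0`_I.
  by move=> I; apply/eqP; rewrite -subr_eq0 -coef2B; apply/eqP; case: Hmpq.
have hM2 : forall J, (spmono s1 s2 a tpq)`_J`_0 = (spmul s1 s2 (a p) (a q))`_J`_0.
  by move=> J; apply/eqP; rewrite -subr_eq0 -coef2B; apply/eqP; case: Hmpq.
have P1 : forall I, (spmul s1 s2 (a p) (a q))`_0`_I = cp * (a q)`_0`_I.
  move=> I; rewrite pure1 // big_ord_recl big1 ?addr0 => [|i _]; last by rewrite hp2 // mul0r.
  by rewrite subn0.
have P2 : forall J, (spmul s1 s2 (a p) (a q))`_J`_0 = tau p cq * (a p)`_J`_0.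
  move=> J; rewrite pure2 // big_ord_recr /= big1 ?add0r => [|j _]; last first.
    by rewrite hq1 ?subn_gt0 // iter_f0 // mulr0.
  by rewrite subnn Ha2.
have HIs : I0 (\sum_(al <- s) spmul s1 s2 (spC (c al)) (spmono s1 s2 a al)).
  rewrite /s !big_cons big_nil addr0 /c !eqxx d1 d2 d3 d4 d5 d6 Hm0 Hmp Hmq.
  split => I; rewrite !coef2D !spmulCl // ?hM1 ?hM2.
    rewrite P1 one_coef /=.
    case: (posnP I) => [->|Ip] /=.
      have e := Ha1 p 0%N cq; rewrite /= in e.
      by rewrite -/cp -/cq mulNr -e mul1r mulr1 mulNr addNr addr0 subrr.
    by rewrite hp2 // !mulr0 mul1r mulNr add0r addr0 subrr.
  rewrite P2 one_coef andbT; case: (posnP I) => [->|Ip] /=.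
    by rewrite -/cp -/cq mul1r mulNr addNKr mulr1 mulNr addNr.
  by rewrite hq1 // mul1r mulNr !mulr0 !addr0 subrr.
have := Hind s c us HIs tpq (mem_head _ _).
by rewrite /c eqxx => /eqP; rewrite oner_eq0.
Qed.
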